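(* (i) For every $r\ge 2$ there exist jointly distributed binary random variables $V_1,\dots,V_r$ for which $R^{s.c.}_{SW} > R_{SW}$ (for instance $V_1=V_2=\dots=V_r$ with $H(V_1)>0$, for which $R_{SW}=H(V_1)/r$ while $R^{s.c.}_{SW}=H(V_1)$). (ii) For every joint distribution $p(v_1,\dots,v_r)$ of binary random variables, $$R^{s.c.}_{SW}\le \min\Big(r\,R_{SW},\ \max_{1\le i\le r} H(V_i)\Big).$$
   Context: Let $V_1,\dots,V_r$ be jointly distributed binary random variables with joint law $p(v_1,\dots,v_r)$, and for each $n$ let $(V_1[t],\dots,V_r[t])$, $t=1,\dots,n$, be i.i.d. copies; write $V_i^n$ for the column vector $(V_i[1],\dots,V_i[n])^t\in\mathbb{F}_2^n$. A rate $R\ge 0$ is achievable with a common compression matrix if for every $\epsilon>0$ and all sufficiently large $n$ there exist a single binary matrix $B$ of size $\lceil nR\rceil\times n$ and a decoding map $g$ such that $\Pr\big[g(BV_1^n,\dots,BV_r^n)\neq (V_1^n,\dots,V_r^n)\big]\le\epsilon$, where the products $BV_i^n$ are computed over $\mathbb{F}_2$. $R^{s.c.}_{SW}$ denotes the infimum of all rates achievable with a common compression matrix. $R_{SW}$ denotes the minimum $R$ such that the symmetric rate tuple $(R,\dots,R)$ lies in the Slepian–Wolf region of $(V_1,\dots,V_r)$, i.e. the minimum $R$ with $|S|\,R\ge H(V_S\mid V_{S^c})$ for every nonempty $S\subseteq\{1,\dots,r\}$ (here $V_S=(V_i)_{i\in S}$). $H(\cdot)$ denotes Shannon entropy in bits.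 *)

(* Defs.v *)
From HB Require Import structures.
From mathcomp Require Import all_boot all_order all_algebra.
From Stdlib Require Import Reals.

Set Implicit Arguments.
Unset Strict Implicit.
Unset Printing Implicit Defensive.

Local Open Scope R_scope.

(* Outcome of one draw of (V_1,...,V_r): a function 'I_r -> bool. *)
Definition Omega (r : nat) := {ffun 'I_r -> bool}.

Definition is_distr (T : finType) (p : T -> R) : Prop :=
  (forall x, 0 <= p x) /\ \big[Rplus/R0]_(x : T) p x = 1.

Definition prob (T : finType) (p : T -> R) (E : pred T) : R :=
  \big[Rplus/R0]_(x : T | E x) p x.

Definition log2 (x : R) : R := ln x / ln 2.

Definition xlog2 (x : R) : R := if Rlt_dec 0 x then x * log2 x else 0.

Definition entropy (T U : finType) (p : T -> R) (X : T -> U) : R :=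
  - \big[Rplus/R0]_(u : U) xlog2 (prob p (fun w => X w == u)).

Definition cond_entropy (T U W : finType) (p : T -> R) (X : T -> U) (Y : T -> W) : R :=
  - \big[Rplus/R0]_(u : U) \big[Rplus/R0]_(y : W)
      (let pxy := prob p (fun w => (X w == u) && (Y w == y)) in
       let py := prob p (fun w => Y w == y) in
       if Rlt_dec 0 pxy then pxy * log2 (pxy / py) else 0).

Definition Vi (r : nat) (i : 'I_r) (v : Omega r) : bool := v i.

(* V_S = (V_i)_{i in S}, encoded as the outcome masked outside S. *)
Definition VS (r : nat) (S : {set 'I_r}) (v : Omega r) : Omega r :=
  [ffun i => if i \in S then v i else false].

(* R_SW: minimal R with |S| R >= H(V_S | V_{S^c}) for all nonempty S,
   i.e. the maximum over nonempty S of H(V_S|V_{S^c}) / |S| (all these are >= 0). *)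
Definition R_SW (r : nat) (p : Omega r -> R) : R :=
  \big[Rmax/R0]_(S : {set 'I_r} | S != set0)
     (cond_entropy p (VS S) (VS (~: S)) / INR #|S|).

(* ceiling of a real, as a natural number (for nonnegative arguments) *)
Definition ceil_nat (x : R) : nat := Z.to_nat (- Int_part (- x)).

(* n i.i.d. draws *)
Definition Sample (r n : nat) := {ffun 'I_n -> Omega r}.

Definition prob_n (r n : nat) (p : Omega r -> R) (w : Sample r n) : R :=
  \big[Rmult/R1]_(t : 'I_n) p (w t).

Section B2F.
Local Open Scope ring_scope.
Definition b2F (b : bool) : 'F_2 := if b then 1 else 0.
End B2F.

Definition Vn (r n : nat) (w : Sample r n) (i : 'I_r) : 'cV['F_2]_n :=
  \col_(t < n) b2F (w t i).

Definition all_Vn (r n : nat) (w : Sample r n) : {ffun 'I_r -> 'cV['F_2]_n} :=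
  [ffun i => Vn w i].

Definition encode (r n m : nat) (B : 'M['F_2]_(m, n)) (w : Sample r n)
  : {ffun 'I_r -> 'cV['F_2]_m} :=
  [ffun i => mulmx B (Vn w i)].

Definition error_prob (r n m : nat) (p : Omega r -> R) (B : 'M['F_2]_(m, n))
  (g : {ffun 'I_r -> 'cV['F_2]_m} -> {ffun 'I_r -> 'cV['F_2]_n}) : R :=
  prob (prob_n p) (fun w => g (encode B w) != all_Vn w).

Definition achievable_sc (r : nat) (p : Omega r -> R) (Rt : R) : Prop :=
  0 <= Rt /\
  forall eps, 0 < eps ->
    exists N : nat, forall n : nat, (N <= n)%nat ->
      exists (B : 'M['F_2]_(ceil_nat (INR n * Rt), n))
             (g : {ffun 'I_r -> 'cV['F_2]_(ceil_nat (INR n * Rt))} ->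
                  {ffun 'I_r -> 'cV['F_2]_n}),
        error_prob p B g <= eps.

Definition is_inf (E : R -> Prop) (m : R) : Prop :=
  (forall x, E x -> m <= x) /\
  (forall m', (forall x, E x -> m' <= x) -> m' <= m).

(* Main.v *)
Require Import Defs.
From HB Require Import structures.
From mathcomp Require Import all_boot all_order all_algebra all_field.
From Stdlib Require Import Reals Lra Lia ZArith Classical ClassicalEpsilon FunctionalExtensionality.
Set Implicit Arguments.
Unset Strict Implicit.
Unset Printing Implicit Defensive.

Module MBase.
Local Open Scope R_scope.

Lemma RplusA' : associative Rplus. Proof. move=> x y z; ring. Qed.
Lemma RmultA' : associative Rmult. Proof. move=> x y z; ring. Qed.
HB.instance Definition _ := Monoid.isComLaw.Build R R0 Rplus RplusA' Rplus_comm Rplus_0_l.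
HB.instance Definition _ := Monoid.isComLaw.Build R R1 Rmult RmultA' Rmult_comm Rmult_1_l.
Lemma Rmult_0_l' : left_zero R0 Rmult. Proof. move=> x; ring. Qed.
Lemma Rmult_0_r' : right_zero R0 Rmult. Proof. move=> x; ring. Qed.
HB.instance Definition _ := Monoid.isMulLaw.Build R R0 Rmult Rmult_0_l' Rmult_0_r'.
Lemma Rmult_plus_l' : left_distributive Rmult Rplus. Proof. move=> x y z; ring. Qed.
Lemma Rmult_plus_r' : right_distributive Rmult Rplus. Proof. move=> x y z; ring. Qed.
HB.instance Definition _ := Monoid.isAddLaw.Build R Rmult Rplus Rmult_plus_l' Rmult_plus_r'.

Notation "\rsum_ ( i | P ) F" := (\big[Rplus/R0]_(i | P) F) (at level 41, F at level 41, i at level 50) : R_scope.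
Notation "\rsum_ i F" := (\big[Rplus/R0]_i F) (at level 41, F at level 41, i at level 0) : R_scope.

Lemma sumR_le (I : finType) (P : pred I) (F G : I -> R) :
  (forall i, P i -> F i <= G i) -> \big[Rplus/R0]_(i | P i) F i <= \big[Rplus/R0]_(i | P i) G i.
Proof.
move=> H; apply: (big_ind2 (fun x y => x <= y)) => //; first lra.
by move=> *; apply Rplus_le_compat.
Qed.

Lemma sumR_ge0 (I : finType) (P : pred I) (F : I -> R) :
  (forall i, P i -> 0 <= F i) -> 0 <= \big[Rplus/R0]_(i | P i) F i.
Proof.
move=> H; apply: (big_ind (fun x => 0 <= x)) => //; first lra.
by move=> *; lra.
Qed.

Lemma sumR_mkcond (I : finType) (P : pred I) (F : I -> R) :
  \big[Rplus/R0]_(i | P i) F i = \big[Rplus/R0]_i (if P i then F i else 0).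
Proof. by rewrite big_mkcond. Qed.

Lemma sumR_sub (I : finType) (P Q : pred I) (F : I -> R) :
  (forall i, 0 <= F i) -> (forall i, P i -> Q i) ->
  \big[Rplus/R0]_(i | P i) F i <= \big[Rplus/R0]_(i | Q i) F i.
Proof.
move=> F0 PQ; rewrite (sumR_mkcond P) (sumR_mkcond Q); apply: sumR_le => i _.
case: (boolP (P i)) => Pi; first by rewrite (PQ _ Pi); lra.
case: (Q i); [apply F0 | lra].
Qed.

Lemma sumR_le_all (I : finType) (P : pred I) (F : I -> R) :
  (forall i, 0 <= F i) -> \big[Rplus/R0]_(i | P i) F i <= \big[Rplus/R0]_i F i.
Proof. by move=> F0; apply: sumR_sub. Qed.

Lemma sumR_const (I : finType) (P : pred I) (c : R) :
  \big[Rplus/R0]_(i | P i) c = INR #|[pred i | P i]| * c.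
Proof.
rewrite big_const_seq -size_filter /= cardE /enum_mem.
elim: (filter _ _) => [|x s IH] /=; first by ring.
rewrite IH; case: (size s) => [|k]; simpl; ring.
Qed.

Lemma prob_ge0 (T : finType) (p : T -> R) E : is_distr p -> 0 <= prob p E.
Proof. by move=> [H _]; apply: sumR_ge0. Qed.

Lemma prob_le1 (T : finType) (p : T -> R) E : is_distr p -> prob p E <= 1.
Proof. move=> [H1 H2]; rewrite -H2; exact: sumR_le_all. Qed.

Lemma prob_mono (T : finType) (p : T -> R) (E F : pred T) : is_distr p ->
  (forall x, E x -> F x) -> prob p E <= prob p F.
Proof. move=> [H _] EF; exact: sumR_sub. Qed.

Lemma prob_ext (T : finType) (p : T -> R) (E F : pred T) :
  (forall x, E x = F x) -> prob p E = prob p F.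
Proof. by move=> EF; apply: eq_bigl. Qed.

Lemma prob_compl (T : finType) (p : T -> R) (E : pred T) : is_distr p ->
  prob p E = 1 - prob p (fun x => ~~ E x).
Proof.
move=> [_ H]; rewrite /prob -H [X in _ = X - _](bigID E) /=.
ring.
Qed.

Ltac fixnlt := repeat match goal with
  | H : ~ (?x < ?y) |- _ => apply Rnot_lt_le in H
  end.

End MBase.
Import MBase.

Module MAnal.
Local Open Scope R_scope.

Definition rp (q b : R) : R := if Rlt_dec 0 q then Rpower q b else 0.

Lemma rp_ge0 q b : 0 <= rp q b.
Proof. rewrite /rp; case: Rlt_dec => /= H; [left; apply: exp_pos | apply: Rle_refl]. Qed.

Lemma rp1 q : 0 <= q -> rp q 1 = q.
Proof. rewrite /rp; case: Rlt_dec => /= H Hq; [by rewrite Rpower_1 | lra]. Qed.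

Lemma rpM a b e : 0 <= a -> 0 <= b -> rp (a * b) e = rp a e * rp b e.
Proof.
move=> Ha Hb; rewrite /rp.
case: (Rlt_dec 0 a) => /= Ha'; case: (Rlt_dec 0 b) => /= Hb';
 case: (Rlt_dec 0 (a*b)) => /= Hab; try nra.
by rewrite Rpower_mult_distr.
Qed.

Lemma rp_chern_lo q t b : 0 < t -> 0 <= q -> q <= t -> 0 < b < 1 ->
  q <= rp q b * Rpower t (1 - b).
Proof.
move=> Ht Hq Hqt Hb; rewrite /rp; case: Rlt_dec => /= Hq'; last first.
  have: 0 < Rpower t (1-b) by apply: exp_pos.
  nra.
rewrite {1}(_ : q = Rpower q b * Rpower q (1 - b)); last first.
  by rewrite -Rpower_plus Rplus_minus Rpower_1.
apply: Rmult_le_compat_l; first by left; apply: exp_pos.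
apply: Rle_Rpower_l; lra.
Qed.

Lemma rp_chern_hi q t a : 0 < t -> t < q -> 1 < a ->
  q <= rp q a * Rpower t (1 - a).
Proof.
move=> Ht Hqt Ha; rewrite /rp; case: Rlt_dec => /= Hq'; last lra.
rewrite {1}(_ : q = Rpower q a * Rpower q (1 - a)); last first.
  by rewrite -Rpower_plus Rplus_minus Rpower_1.
apply: Rmult_le_compat_l; first by left; apply: exp_pos.
have ->: 1 - a = - (a - 1) by ring.
rewrite !Rpower_Ropp; apply: Rinv_le_contravar; first by apply: exp_pos.
apply: Rle_Rpower_l; lra.
Qed.

Definition xln (q : R) : R := if Rlt_dec 0 q then q * ln q else 0.

Lemma deriv_eq f x l l' : derivable_pt_lim f x l -> l = l' -> derivable_pt_lim f x l'.
Proof. by move=> H <-. Qed.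

Lemma rp_derive q x : derivable_pt_lim (fun b => rp q b) x (rp q x * ln q).
Proof.
rewrite /rp; case: Rlt_dec => /= Hq; last first.
  have ->: (fun _ : R => 0) = fct_cte 0 by [].
  rewrite Rmult_0_l; exact: derivable_pt_lim_const.
rewrite /Rpower.
have ->: (fun b => exp (b * ln q)) = comp exp (fun b => b * ln q) by [].
apply: derivable_pt_lim_comp; last exact: derivable_pt_lim_exp.
have ->: (fun b => b * ln q) = mult_real_fct (ln q) id.
  by apply: functional_extensionality => b; rewrite /mult_real_fct /id; ring.
rewrite {2}(_ : ln q = ln q * 1); last by ring.
apply: derivable_pt_lim_scal; exact: derivable_pt_lim_id.
Qed.

Lemma sum_derive (I : finType) (f : I -> R -> R) (d : I -> R) x :
  (forall i, derivable_pt_lim (f i) x (d i)) ->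
  derivable_pt_lim (fun b => \big[Rplus/R0]_i f i b) x (\big[Rplus/R0]_i d i).
Proof.
move=> H; rewrite unlock /reducebig.
elim: (index_enum I) => [|a s IH] /=.
  have ->: (fun _ : R => 0) = fct_cte 0 by [].
  exact: derivable_pt_lim_const.
have ->: (fun b => f a b + foldr (fun i acc => f i b + acc) 0 s) =
   plus_fct (f a) (fun b => foldr (fun i acc => f i b + acc) 0 s) by [].
by apply: derivable_pt_lim_plus.
Qed.

Lemma sign_left f l : derivable_pt_lim f 1 l -> f 1 = 0 -> 0 < l ->
  exists b, 0 < b < 1 /\ f b < 0.
Proof.
move=> H f1 Hl; have [d Hd] := H (l/2) ltac:(lra).
have dpos := cond_pos d.
set h := Rmin (d/2) (1/2).
have hpos : 0 < h by apply: Rmin_pos; lra.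
have hle : h <= d/2 by apply: Rmin_l.
have hle2 : h <= 1/2 by apply: Rmin_r.
have := Hd (-h) ltac:(lra) ltac:(rewrite Rabs_Ropp Rabs_pos_eq; lra).
rewrite f1 Rminus_0_r => Hq.
exists (1 - h); split; first lra.
have Hq' := Rabs_def2 _ _ Hq.
have: f (1 + - h) / - h > 0 by lra.
have ->: 1 + - h = 1 - h by ring.
move=> Hpos.
have: f (1 - h) = (f (1 - h) / - h) * (- h) by field; lra.
nra.
Qed.

Lemma sign_right f l : derivable_pt_lim f 1 l -> f 1 = 0 -> l < 0 ->
  exists a, 1 < a /\ f a < 0.
Proof.
move=> H f1 Hl; have [d Hd] := H (-l/2) ltac:(lra).
have dpos := cond_pos d.
have := Hd (d/2) ltac:(lra) ltac:(rewrite Rabs_pos_eq; lra).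
rewrite f1 Rminus_0_r => Hq.
exists (1 + d/2); split; first lra.
have Hq' := Rabs_def2 _ _ Hq.
have: f (1 + d/2) = (f (1 + d/2) / (d/2)) * (d/2) by field; lra.
nra.
Qed.

Lemma phi_derive (I : finType) (q : I -> R) g :
  derivable_pt_lim (fun b => \big[Rplus/R0]_i rp (q i) b - Rpower 2 ((1 - b) * g)) 1
     (\big[Rplus/R0]_i xln (q i) + g * ln 2).
Proof.
have ->: \big[Rplus/R0]_i xln (q i) + g * ln 2 =
   \big[Rplus/R0]_i (rp (q i) 1 * ln (q i)) - (Rpower 2 ((1 - 1) * g) * (- g * ln 2)).
  rewrite Rminus_diag Rmult_0_l Rpower_O; last lra.
  have ->: \big[Rplus/R0]_i (rp (q i) 1 * ln (q i)) = \big[Rplus/R0]_i xln (q i).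
    apply: eq_bigr => i _; rewrite /rp /xln; case: Rlt_dec => /= H; last ring.
    by rewrite Rpower_1.
  ring.
have ->: (fun b => \big[Rplus/R0]_i rp (q i) b - Rpower 2 ((1 - b) * g)) =
  minus_fct (fun b => \big[Rplus/R0]_i rp (q i) b) (fun b => Rpower 2 ((1 - b) * g)) by [].
apply: derivable_pt_lim_minus; first by apply: sum_derive => i; apply: rp_derive.
rewrite /Rpower.
have ->: (fun b => exp ((1 - b) * g * ln 2)) = comp exp (fun b => (1 - b) * g * ln 2) by [].
apply: derivable_pt_lim_comp; last exact: derivable_pt_lim_exp.
have ->: (fun b => (1 - b) * g * ln 2) = plus_fct (fct_cte (g * ln 2)) (mult_real_fct (- g * ln 2) id).
  by apply: functional_extensionality => b; rewrite /plus_fct /fct_cte /mult_real_fct /id; ring.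
apply: (deriv_eq (derivable_pt_lim_plus _ _ _ _ _ (derivable_pt_lim_const (g * ln 2) 1)
  (derivable_pt_lim_scal _ (- g * ln 2) _ _ (derivable_pt_lim_id 1)))); ring.
Qed.

Lemma sum_rp1 (I : finType) (q : I -> R) : (forall i, 0 <= q i) ->
  \big[Rplus/R0]_i rp (q i) 1 = \big[Rplus/R0]_i q i.
Proof. by move=> H; apply: eq_bigr => i _; rewrite rp1. Qed.

Lemma renyi_lo (I : finType) (q : I -> R) g :
  (forall i, 0 <= q i) -> \big[Rplus/R0]_i q i = 1 ->
  0 < \big[Rplus/R0]_i xln (q i) + g * ln 2 ->
  exists b, 0 < b < 1 /\ \big[Rplus/R0]_i rp (q i) b < Rpower 2 ((1 - b) * g).
Proof.
move=> H0 H1 Hl.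
have [b [Hb Hf]] := sign_left (phi_derive q g) ltac:(cbv beta; rewrite sum_rp1 // H1 Rminus_diag Rmult_0_l Rpower_O; lra) Hl.
exists b; split => //; lra.
Qed.

Lemma renyi_hi (I : finType) (q : I -> R) g :
  (forall i, 0 <= q i) -> \big[Rplus/R0]_i q i = 1 ->
  \big[Rplus/R0]_i xln (q i) + g * ln 2 < 0 ->
  exists a, 1 < a /\ \big[Rplus/R0]_i rp (q i) a < Rpower 2 ((1 - a) * g).
Proof.
move=> H0 H1 Hl.
have [a [Ha Hf]] := sign_right (phi_derive q g) ltac:(cbv beta; rewrite sum_rp1 // H1 Rminus_diag Rmult_0_l Rpower_O; lra) Hl.
exists a; split => //; lra.
Qed.

End MAnal.
Import MAnal.

Module MEnt.
Local Open Scope R_scope.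

Lemma ln2_pos : 0 < ln 2.
Proof. have := ln_lt_2; have : 0 < / 2 by lra. lra. Qed.

Lemma ln_le' x y : 0 < x -> x <= y -> ln x <= ln y.
Proof. move=> Hx [Hxy|->]; [left; exact: ln_increasing | lra]. Qed.

Lemma xlog2E x : xlog2 x = xln x / ln 2.
Proof. rewrite /xlog2 /xln /log2; case: Rlt_dec => /= H; field; have := ln2_pos; lra. Qed.

Lemma xln_super a b : 0 <= a -> 0 <= b -> xln a + xln b <= xln (a + b).
Proof.
move=> Ha Hb; rewrite /xln.
case: (Rlt_dec 0 a) => /= Ha'; case: (Rlt_dec 0 b) => /= Hb';
  case: (Rlt_dec 0 (a + b)) => /= Hab; fixnlt; try lra.
- have h1 : a <= a + b by lra.
  have h2 : b <= a + b by lra.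
  have l1 := ln_le' Ha' h1; have l2 := ln_le' Hb' h2.
  have := Rmult_le_compat_l a _ _ (Rlt_le _ _ Ha') l1.
  have := Rmult_le_compat_l b _ _ (Rlt_le _ _ Hb') l2. lra.
- have ->: b = 0 by lra. rewrite !Rplus_0_r; lra.
- have ->: a = 0 by lra. rewrite !Rplus_0_l; lra.
Qed.

Lemma xln_sum (I : finType) (P : pred I) (F : I -> R) : (forall i, 0 <= F i) ->
  \big[Rplus/R0]_(i | P i) xln (F i) <= xln (\big[Rplus/R0]_(i | P i) F i).
Proof.
move=> H0.
suff: \big[Rplus/R0]_(i | P i) xln (F i) <= xln (\big[Rplus/R0]_(i | P i) F i) /\ 0 <= \big[Rplus/R0]_(i | P i) F i by case.
apply: (big_ind2 (fun x y => x <= xln y /\ 0 <= y)).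
- rewrite /xln; case: Rlt_dec => /= H; lra.
- move=> x1 x2 y1 y2 [h1 h1'] [h2 h2']; split; last lra.
  have := xln_super h1' h2'; lra.
- by move=> i _; split; [lra | apply H0].
Qed.

Lemma sum_divR (I : finType) (P : pred I) (F : I -> R) c :
  \big[Rplus/R0]_(i | P i) (F i / c) = (\big[Rplus/R0]_(i | P i) F i) / c.
Proof. by rewrite /Rdiv big_distrl. Qed.

Lemma sum_oppR (I : finType) (P : pred I) (F : I -> R) :
  \big[Rplus/R0]_(i | P i) (- F i) = - \big[Rplus/R0]_(i | P i) F i.
Proof.
apply: (big_ind2 (fun x y => x = - y)) => //; first lra.
by move=> x1 x2 y1 y2 -> ->; ring.
Qed.

Definition Hj (T : finType) (p : T -> R) := - \big[Rplus/R0]_w xlog2 (p w).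

Lemma entropyE (T U : finType) (p : T -> R) (X : T -> U) :
  entropy p X = - (\big[Rplus/R0]_u xln (prob p (fun w => X w == u))) / ln 2.
Proof.
rewrite /entropy.
under eq_bigr => u _ do rewrite xlog2E. rewrite sum_divR. by field; have := ln2_pos; lra.
Qed.

Lemma HjE (T : finType) (p : T -> R) :
  Hj p = - (\big[Rplus/R0]_w xln (p w)) / ln 2.
Proof.
rewrite /Hj.
under eq_bigr => u _ do rewrite xlog2E. rewrite sum_divR. by field; have := ln2_pos; lra.
Qed.

Lemma sum_partition (T U : finType) (X : T -> U) (F : T -> R) :
  \big[Rplus/R0]_w F w = \big[Rplus/R0]_u \big[Rplus/R0]_(w | X w == u) F w.
Proof. by rewrite (partition_big X predT) //. Qed.

Lemma entropy_le_Hj (T U : finType) (p : T -> R) (X : T -> U) : is_distr p ->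
  entropy p X <= Hj p.
Proof.
move=> [H0 H1]; rewrite entropyE HjE.
apply: Rmult_le_compat_r; first by left; apply: Rinv_0_lt_compat; exact: ln2_pos.
apply: Ropp_le_contravar.
rewrite (sum_partition X); apply: sumR_le => u _.
rewrite /prob; exact: xln_sum.
Qed.

Lemma xln0 : xln 0 = 0.
Proof. by rewrite /xln; case: Rlt_dec => /= H; [lra|]. Qed.

Lemma entropy_inj (T U : finType) (p : T -> R) (X : T -> U) : is_distr p ->
  (forall w w', 0 < p w -> 0 < p w' -> X w = X w' -> w = w') ->
  entropy p X = Hj p.
Proof.
move=> [H0 H1] Hinj; rewrite entropyE HjE; congr (- _ / _).
rewrite (sum_partition X); apply: eq_bigr => u _; rewrite /prob.
case: (pickP (fun w => (X w == u) && (Rlt_dec 0 (p w)))) => [w0 /andP [/eqP Xw0 Hw0] | Hn].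
- have Pw0 : 0 < p w0 by move: Hw0; case: Rlt_dec.
  have Hz : forall w, (X w == u) && (w != w0) -> p w = 0.
    move=> w /andP [/eqP Xw Hne]; case: (Rlt_dec 0 (p w)) => Hp; last by have := H0 w; lra.
    by move: Hne; rewrite (Hinj w w0 Hp Pw0 (etrans Xw (esym Xw0))) eqxx.
  have E1 : \big[Rplus/R0]_(w | X w == u) xln (p w) = xln (p w0).
    rewrite (bigD1 w0) /=; last by rewrite Xw0.
    rewrite big1; last by move=> w Hw; rewrite Hz // xln0.
    change R0 with 0; lra.
  have E2 : \big[Rplus/R0]_(w | X w == u) p w = p w0.
    rewrite (bigD1 w0) /=; last by rewrite Xw0.
    rewrite big1; last by move=> w Hw; rewrite Hz.
    change R0 with 0; lra.
  by rewrite E1 E2.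
- have Hz : forall w, X w == u -> p w = 0.
    move=> w Xw; have := Hn w; rewrite Xw /=; case: Rlt_dec => //= Hp _; have := H0 w; lra.
  have E1 : \big[Rplus/R0]_(w | X w == u) xln (p w) = 0.
    by rewrite big1 // => w Hw; rewrite Hz // xln0.
  have E2 : \big[Rplus/R0]_(w | X w == u) p w = 0.
    by rewrite big1 // => w Hw; rewrite Hz.
  by rewrite E1 E2 xln0.
Qed.

Lemma prob0 (T : finType) (p : T -> R) (E : pred T) : (forall x, E x = false) -> prob p E = 0.
Proof. by move=> H; rewrite /prob big_pred0. Qed.

Lemma probT (T : finType) (p : T -> R) (E : pred T) : is_distr p -> (forall x, E x) -> prob p E = 1.
Proof. move=> [_ H1] H; rewrite /prob -H1; apply: eq_bigl => x; exact: H. Qed.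

Lemma cond_const (T U W : finType) (p : T -> R) (X : T -> U) (Y : T -> W) y0 :
  is_distr p -> (forall w, Y w = y0) -> cond_entropy p X Y = entropy p X.
Proof.
move=> Hp HY; rewrite /cond_entropy /entropy; congr (- _); apply: eq_bigr => u _.
rewrite (bigD1 y0) //= big1; last first.
  move=> y Hy; rewrite prob0; first by case: Rlt_dec => /= H; [lra|].
  by move=> w; rewrite HY (_ : (y0 == y) = false) ?andbF //; apply/negbTE; rewrite eq_sym.
rewrite (@probT _ _ (fun w => Y w == y0) Hp); last by move=> w; rewrite HY eqxx.
rewrite (prob_ext _ (F := fun w => X w == u)); last by move=> w; rewrite HY eqxx andbT.
rewrite /xlog2; case: Rlt_dec => /= H; change R0 with 0; last lra.
rewrite Rdiv_1_r; lra.
Qed.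

Lemma cond_zero (T U W : finType) (p : T -> R) (X : T -> U) (Y : T -> W) :
  (forall u y, 0 < prob p (fun w => (X w == u) && (Y w == y)) ->
     prob p (fun w => (X w == u) && (Y w == y)) = prob p (fun w => Y w == y)) ->
  cond_entropy p X Y = 0.
Proof.
move=> H; rewrite /cond_entropy big1; first by change R0 with 0; lra.
move=> u _; apply: big1 => y _ /=; case: Rlt_dec => /= Hl; last done.
rewrite -(H u y Hl) /Rdiv Rinv_r; last lra.
by rewrite /log2 ln_1; change R0 with 0; field; have := ln2_pos; lra.
Qed.

Lemma bigmax_le (I : finType) (P : pred I) (F : I -> R) M : 0 <= M ->
  (forall i, P i -> F i <= M) -> \big[Rmax/R0]_(i | P i) F i <= M.
Proof.
move=> M0 H; apply: (big_ind (fun x => x <= M)) => //.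
by move=> x y hx hy; apply: Rmax_lub.
Qed.

Lemma le_bigmax (I : finType) (P : pred I) (F : I -> R) i0 : P i0 ->
  F i0 <= \big[Rmax/R0]_(i | P i) F i.
Proof.
move=> Pi0; rewrite unlock /reducebig.
have : i0 \in index_enum I by rewrite mem_index_enum.
elim: (index_enum I) => [|a s IH] //= Hin.
rewrite in_cons in Hin; case/orP: Hin => [/eqP Ea|Hin].
  subst a; rewrite Pi0; apply: Rmax_l.

case: (P a); last exact: IH.
apply: Rle_trans (IH Hin) _; apply: Rmax_r.
Qed.

End MEnt.
Import MEnt.

Module MProd.
Local Open Scope R_scope.

Lemma prodR_const n (c : R) : \big[Rmult/R1]_(t < n) c = c ^ n.
Proof. rewrite big_const_ord; elim: n => [|n IH] //=; by rewrite IH. Qed.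

Lemma prodR_ge0 (I : finType) (F : I -> R) : (forall i, 0 <= F i) -> 0 <= \big[Rmult/R1]_i F i.
Proof. move=> H; apply: (big_ind (fun x => 0 <= x)) => //; [lra | move=> *; nra]. Qed.

Lemma rp_prod (I : finType) (F : I -> R) b : (forall i, 0 <= F i) ->
  rp (\big[Rmult/R1]_i F i) b = \big[Rmult/R1]_i rp (F i) b.
Proof.
move=> H.
suff : 0 <= \big[Rmult/R1]_i F i /\ rp (\big[Rmult/R1]_i F i) b = \big[Rmult/R1]_i rp (F i) b by case.
apply: (big_ind2 (fun x y => 0 <= x /\ rp x b = y)).
- split; first lra. rewrite /rp; case: Rlt_dec => /= h; last lra.
  by rewrite /Rpower ln_1 Rmult_0_r exp_0.
- move=> x1 x2 y1 y2 [h1 <-] [h2 <-]; split; [nra | by rewrite rpM].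
- by move=> i _; split.
Qed.

Lemma prod_cond (I : finType) (c : I -> bool) (F : I -> R) :
  \big[Rmult/R1]_i (if c i then F i else 0) = if [forall i, c i] then \big[Rmult/R1]_i F i else 0.
Proof.
case: (boolP [forall i, c i]) => [/forallP H|/forallPn [i0 Hi0]].
  by apply: eq_bigr => i _; rewrite H.
rewrite (bigD1 i0) //= (negbTE Hi0); change R0 with 0; ring.
Qed.

Lemma marginal (r n : nat) (p : Omega r -> R) (U : finType) (f : Omega r -> U)
  (x : {ffun 'I_n -> U}) :
  prob (prob_n p) (fun w : Sample r n => [ffun t => f (w t)] == x) =
  \big[Rmult/R1]_t prob p (fun v => f v == x t).
Proof.
rewrite /prob.
under [RHS]eq_bigr => t _ do rewrite big_mkcond /=.
rewrite bigA_distr_bigA /= big_mkcond /=; apply: eq_bigr => w _.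
rewrite prod_cond /prob_n; congr (if _ then _ else _).
apply/eqP/forallP => [<- t|H]; first by rewrite ffunE.
by apply/ffunP => t; rewrite ffunE; apply/eqP.
Qed.

Lemma sum_prod (I J : finType) (F : I -> J -> R) :
  \big[Rplus/R0]_(f : {ffun I -> J}) \big[Rmult/R1]_i F i (f i) =
  \big[Rmult/R1]_i \big[Rplus/R0]_j F i j.
Proof. by rewrite bigA_distr_bigA. Qed.

End MProd.
Import MProd.

Module MMat.
Import GRing.Theory.
Local Open Scope ring_scope.

Section MatCount.
Variable F : finFieldType.

Lemma card_fiber m n (d : 'cV[F]_n) (c : 'cV[F]_m) : d != 0 ->
  #|[set B : 'M[F]_(m,n) | B *m d == c]| = #|[set B : 'M[F]_(m,n) | B *m d == 0]|.
Proof.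
move=> dn0.
have [j Hj] : exists j, d j 0 != 0.
  apply/existsP; apply: contraR dn0 => /existsPn H; apply/eqP/matrixP => i k.
  rewrite (ord1 k) mxE; by move/negPn/eqP: (H i).
set E := (d j 0)^-1 *: (c *m delta_mx 0 j).
have Ed : E *m d = c.
  rewrite /E -scalemxAl -mulmxA -rowE [row j d]mx11_scalar mul_mx_scalar scalerA.
  by rewrite mxE mulVf // scale1r.
have -> : [set B : 'M[F]_(m,n) | B *m d == c] = (fun B => B + E) @: [set B : 'M[F]_(m,n) | B *m d == 0].
  apply/setP => B; rewrite inE; apply/eqP/imsetP => [H|[B0]].
    exists (B - E); last by rewrite subrK.
    by rewrite inE mulmxBl H Ed subrr.
  by rewrite inE => /eqP H ->; rewrite mulmxDl H Ed add0r.
by rewrite card_imset //; apply: addIr.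
Qed.

Lemma card_ker m n (d : 'cV[F]_n) : d != 0 ->
  muln #|[set B : 'M[F]_(m,n) | B *m d == 0]| (expn #|F| m) = expn #|F| (muln m n).
Proof.
move=> dn0.
have H1 : #|{: 'M[F]_(m,n)}| = \big[addn/0%nat]_(c : 'cV[F]_m) #|[set B : 'M[F]_(m,n) | B *m d == c]|.
  rewrite -sum1_card (partition_big (fun B : 'M[F]_(m,n) => B *m d) predT) //=.
  apply: eq_bigr => c _; rewrite -sum1_card; apply: eq_bigl => B; by rewrite inE.
move: H1; rewrite card_mx => ->.
under eq_bigr => c _ do rewrite (card_fiber c dn0).
rewrite sum_nat_const card_mx muln1 mulnC //.
Qed.
End MatCount.

End MMat.
Import MMat.

Module MMisc.
Local Open Scope R_scope.

Lemma ceil_nat_spec x : 0 <= x -> x <= INR (ceil_nat x) < x + 1.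
Proof.
move=> Hx; rewrite /ceil_nat /Int_part.
have [h1 h2] := archimed (- x).
have hz : (0 <= - (up (- x) - 1))%Z.
  apply: le_IZR; rewrite opp_IZR minus_IZR; lra.
rewrite INR_IZR_INZ Z2Nat.id // opp_IZR minus_IZR; lra.
Qed.

Lemma inf_exists (E : R -> Prop) : (exists x, E x) -> (forall x, E x -> 0 <= x) ->
  exists m, is_inf E m.
Proof.
move=> [x0 Ex0] Hlb.
set L := fun m => forall x, E x -> m <= x.
have bL : bound L by exists x0 => m Hm; exact: Hm.
have neL : exists m, L m by exists 0.
have [m [Hub Hl]] := completeness L bL neL.
exists m; split.
- move=> x Ex; apply: Hl => m' Hm'; exact: Hm'.
- move=> m' Hm'; exact: Hub.
Qed.

End MMisc.
Import MMisc.

Module MAch.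
Local Open Scope ring_scope.
Local Open Scope R_scope.

Definition indR (b : bool) : R := if b then 1 else 0.
Definition Rltb (a b : R) : bool := if Rlt_dec a b then true else false.

Lemma RltbP a b : reflect (a < b) (Rltb a b).
Proof. rewrite /Rltb; case: Rlt_dec => /= H; [by left | by right]. Qed.

Definition toV n (x : {ffun 'I_n -> bool}) : 'cV['F_2]_n := \col_t b2F (x t).

Lemma b2F_inj : injective b2F.
Proof. by case; case. Qed.

Lemma toV_inj n : injective (@toV n).
Proof.
move=> x y H; apply/ffunP => t; apply: b2F_inj.
by have := congr1 (fun M : 'cV_n => M t ord0) H; rewrite /toV !mxE.
Qed.

Definition two : R := 2.

Lemma INR_muln (a b : nat) : INR (muln a b) = INR a * INR b.
Proof. exact: mult_INR. Qed.

Lemma INR_expn (a k : nat) : INR (expn a k) = INR a ^ k.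
Proof. elim: k => [|k IH] //; by rewrite expnS INR_muln IH. Qed.

Lemma ratio_helper (a : R) m : a * 1 = a * INR 2 ^ m / two ^ m.
Proof.
have -> : INR 2 = two by rewrite /two /=; lra.
have : 0 < two ^ m by apply: pow_lt; rewrite /two; lra.
move=> h; field; lra.
Qed.

Section Single.
Variables (T : finType) (P : T -> R) (n m : nat) (Y : T -> {ffun 'I_n -> bool}).
Hypothesis HP : is_distr P.

Definition Qd (x : {ffun 'I_n -> bool}) := prob P (fun w => Y w == x).

Definition dec (t : R) (B : 'M['F_2]_(m, n)) (s : 'cV['F_2]_m) : 'cV['F_2]_n :=
  if [pick x | Rltb t (Qd x) && (B *m toV x == s)] is Some x then toV x else GRing.zero.

Lemma err_pt t B x :
  dec t B (B *m toV x) != toV x ->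
  ~~ Rltb t (Qd x) || [exists x', (x' != x) && Rltb t (Qd x') && (B *m toV x' == B *m toV x)].
Proof.
rewrite /dec; case: pickP => [x'' /andP [A'' E''] | Hn] Hne.
  case: (boolP (Rltb t (Qd x))) => //= Ax; apply/existsP; exists x''.
  rewrite A'' E'' andbT andbT; apply: contraNneq Hne => ->; exact: eqxx.
case: (boolP (Rltb t (Qd x))) => //= Ax.
by have := Hn x; rewrite Ax eqxx.
Qed.

Lemma ind_or_ex (a : bool) (I : finType) (c : I -> bool) :
  indR (a || [exists i, c i]) <= indR a + \big[Rplus/R0]_i indR (c i).
Proof.
have H0 : 0 <= \big[Rplus/R0]_i indR (c i) by apply: sumR_ge0 => i _; rewrite /indR; case: (c i); lra.
have i1 : indR true = 1 by [].
have i0 : indR false = 0 by [].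
case: a => /=; first lra.
case: (boolP [exists i, c i]) => [/existsP [i Hi]|_]; last lra.
rewrite (bigD1 i) //= Hi.
have : 0 <= \big[Rplus/R0]_(j | j != i) indR (c j) by apply: sumR_ge0 => j _; rewrite /indR; case: (c j); lra.
lra.
Qed.

Lemma sumQ : \big[Rplus/R0]_x Qd x = 1.
Proof. by case: HP => _ H1; rewrite /Qd /prob -H1 [in RHS](sum_partition Y). Qed.

Lemma Qd_ge0 x : 0 <= Qd x.
Proof. exact: prob_ge0. Qed.

Lemma sum_by_Y (g : {ffun 'I_n -> bool} -> R) :
  \big[Rplus/R0]_w (P w * g (Y w)) = \big[Rplus/R0]_x (Qd x * g x).
Proof.
rewrite (sum_partition Y); apply: eq_bigr => x _.
rewrite /Qd /prob big_distrl /=; apply: eq_bigr => w /eqP ->; done.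
Qed.

Lemma cardA t : 0 < t -> INR #|[pred x | Rltb t (Qd x)]| * t <= 1.
Proof.
move=> tpos; rewrite -sumR_const -sumQ.
apply: Rle_trans (sumR_le_all _ Qd_ge0).
by apply: sumR_le => x /RltbP; lra.
Qed.

End Single.

Section MatAvg.
Import GRing.Theory.
Local Open Scope ring_scope.
Lemma mat_avg m n (a b : 'cV['F_2]_n) : a != b ->
  \big[Rplus/R0]_(B : 'M['F_2]_(m, n)) indR (B *m a == B *m b) =
  Rdiv (INR #|{: 'M['F_2]_(m, n)}|) (pow two m).
Proof.
move=> ab.
have d0 : (a - b) != 0 by rewrite subr_eq0.
have := card_ker m d0; rewrite card_Fp // => Hc.
rewrite card_mx card_Fp // -Hc.
transitivity (\big[Rplus/R0]_(B : 'M['F_2]_(m, n) | B \in [set B : 'M['F_2]_(m,n) | B *m (a - b) == 0]) R1).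
  rewrite [RHS]sumR_mkcond; apply: eq_bigr => B _; rewrite inE mulmxBr subr_eq0 //.
rewrite sumR_const INR_muln INR_expn.
rewrite (eq_card (B := [set B : 'M['F_2]_(m,n) | B *m (a - b) == 0])) //.
apply: ratio_helper.
Qed.
End MatAvg.


Lemma ind_mono (a b : bool) : (a -> b) -> indR a <= indR b.
Proof.
rewrite /indR; case: a; case: b => //= H; try lra.
by have := H isT.
Qed.

Lemma ind_ge0 b : 0 <= indR b.
Proof. by case: b; rewrite /indR; lra. Qed.

Section Avg.
Variables (T : finType) (P : T -> R) (n m : nat) (Y : T -> {ffun 'I_n -> bool}).
Hypothesis HP : is_distr P.

Definition err t (B : 'M['F_2]_(m, n)) :=
  prob P (fun w => dec P Y t B (B *m toV (Y w)) != toV (Y w)).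

Definition Aset t := [pred x | Rltb t (Qd P Y x)].

Definition collide t (B : 'M['F_2]_(m, n)) x x' :=
  (x' != x) && Rltb t (Qd P Y x') && (B *m toV x' == B *m toV x).

Lemma err_le t B : err t B <=
  \big[Rplus/R0]_w (P w * (indR (~~ Rltb t (Qd P Y (Y w))) + \big[Rplus/R0]_x' indR (collide t B (Y w) x'))).
Proof.
rewrite /err /prob sumR_mkcond; apply: sumR_le => w _.
have Pw : 0 <= P w by case: HP.
apply: Rle_trans (_ : P w * indR (dec P Y t B (B *m toV (Y w)) != toV (Y w)) <= _).
  by rewrite /indR; case: ifP => _; lra.
apply: Rmult_le_compat_l => //.
apply: Rle_trans (ind_or_ex _ _).
by apply: ind_mono => H; apply: err_pt.
Qed.


Definition Kc := INR #|{: 'M['F_2]_(m, n)}|.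

Lemma two_pow_pos k : 0 < two ^ k.
Proof. apply: pow_lt; rewrite /two; lra. Qed.

Lemma Kc_ge0 : 0 <= Kc.
Proof. exact: pos_INR. Qed.

Lemma sum_collide t x x' :
  \big[Rplus/R0]_B indR (collide t B x x') =
  if (x' != x) && Rltb t (Qd P Y x') then Kc / two ^ m else 0.
Proof.
rewrite /collide; case: ifP => H.
  have ne : toV x' != toV x.
    case/andP: H => H _; apply: contra H => /eqP/toV_inj ->; by rewrite eqxx.
  rewrite /Kc -(mat_avg m ne).
  by apply: eq_bigr => B _.
by rewrite big1.
Qed.

Lemma sumB_const (c : R) : \big[Rplus/R0]_(B : 'M['F_2]_(m, n)) c = Kc * c.
Proof. by rewrite sumR_const /Kc; congr (INR _ * _); apply: eq_card. Qed.

Lemma pt_bound t w : 0 < t ->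
  \big[Rplus/R0]_B (indR (~~ Rltb t (Qd P Y (Y w))) + \big[Rplus/R0]_x' indR (collide t B (Y w) x'))
  <= Kc * indR (~~ Rltb t (Qd P Y (Y w))) + Kc / t / two ^ m.
Proof.
move=> tpos; rewrite big_split /= sumB_const; apply: Rplus_le_compat_l.
rewrite exchange_big /=.
under eq_bigr => x' _ do rewrite sum_collide.
apply: Rle_trans (_ : \big[Rplus/R0]_(x' | Rltb t (Qd P Y x')) (Kc / two ^ m) <= _).
  rewrite [X in _ <= X]sumR_mkcond; apply: sumR_le => x' _.
  have := two_pow_pos m; have := Kc_ge0.
  case: (x' != Y w); case: (Rltb t (Qd P Y x')) => /= h1 h2; try lra.
  apply: Rmult_le_pos => //; left; exact: Rinv_0_lt_compat.
rewrite sumR_const.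
have hA := cardA Y HP tpos.
have := two_pow_pos m; have := Kc_ge0 => h1 h2.
set a := INR _ in hA *.
have -> : Kc / t / two ^ m = (Kc / two ^ m) * / t by field; lra.
have ha : a <= / t.
  apply: (Rmult_le_reg_r t) => //; rewrite Rinv_l; lra.
rewrite Rmult_comm; apply: Rmult_le_compat_l => //.
apply: Rmult_le_pos => //; left; exact: Rinv_0_lt_compat.
Qed.

Lemma avg_bound t b : 0 < t -> 0 < b < 1 ->
  \big[Rplus/R0]_B err t B <=
  Kc * (Rpower t (1 - b) * \big[Rplus/R0]_x rp (Qd P Y x) b + / t / two ^ m).
Proof.
move=> tpos hb.
apply: Rle_trans (sumR_le (fun B _ => err_le t B)) _.
rewrite exchange_big /=.
apply: Rle_trans (_ : \big[Rplus/R0]_w (P w * (Kc * indR (~~ Rltb t (Qd P Y (Y w))) + Kc / t / two ^ m)) <= _).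
  apply: sumR_le => w _; rewrite -big_distrr /=.
  apply: Rmult_le_compat_l; first by case: HP.
  exact: pt_bound.
rewrite (sum_by_Y P Y (fun x => Kc * indR (~~ Rltb t (Qd P Y x)) + Kc / t / two ^ m)).
under eq_bigr => x _ do rewrite Rmult_plus_distr_l.
rewrite big_split /= -big_distrl /= (sumQ Y HP) Rmult_1_l.
have -> : Kc * (Rpower t (1 - b) * \big[Rplus/R0]_x rp (Qd P Y x) b + / t / two ^ m)
   = Kc * (Rpower t (1 - b) * \big[Rplus/R0]_x rp (Qd P Y x) b) + Kc / t / two ^ m by have := two_pow_pos m; move=> ?; field; repeat split; lra.
apply: Rplus_le_compat_r.
rewrite big_distrr /= big_distrr /=; apply: sumR_le => x _.
have hQ := Qd_ge0 Y HP x.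
have := Kc_ge0; rewrite /indR; case: RltbP => /= h h2.
  have := rp_ge0 (Qd P Y x) b; have : 0 < Rpower t (1-b) by apply: exp_pos.
  move=> *; apply: Rle_trans (_ : 0 <= _); first lra.
  apply: Rmult_le_pos => //; apply: Rmult_le_pos; lra.
have := rp_chern_lo tpos hQ (Rnot_lt_le _ _ h) hb => hc.
rewrite Rmult_1_r -Rmult_assoc (Rmult_comm _ Kc) (Rmult_assoc Kc); apply: Rmult_le_compat_l => //.
by rewrite Rmult_comm.
Qed.

End Avg.

End MAch.
Import MAch.

Module MAch2.
Local Open Scope ring_scope.
Local Open Scope R_scope.

Lemma distr_n r n (p : Omega r -> R) : is_distr p -> is_distr (@prob_n r n p).
Proof.
move=> [H0 H1]; split.
  by move=> w; apply: prodR_ge0 => t; apply: H0.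
rewrite /prob_n (sum_prod (fun (t : 'I_n) v => p v)) H1 prodR_const; exact: pow1.
Qed.

Definition Ycomp r n (i : 'I_r) (w : Sample r n) : {ffun 'I_n -> bool} := [ffun t => w t i].

Lemma Vn_toV r n (w : Sample r n) i : Vn w i = toV (Ycomp i w).
Proof. by apply/matrixP => t k; rewrite /Vn /toV !mxE ffunE. Qed.

Lemma renyi_tensor r n (p : Omega r -> R) (i : 'I_r) b : is_distr p ->
  \big[Rplus/R0]_x rp (Qd (@prob_n r n p) (Ycomp i) x) b =
  (\big[Rplus/R0]_c rp (prob p (fun v => v i == c)) b) ^ n.
Proof.
move=> Hp.
have E : forall x, Qd (@prob_n r n p) (Ycomp i) x = \big[Rmult/R1]_t prob p (fun v => v i == x t).
  move=> x; rewrite /Qd -(marginal p (fun v => v i)); apply: prob_ext => w //.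
have E' : forall x, rp (Qd (@prob_n r n p) (Ycomp i) x) b =
   \big[Rmult/R1]_t rp (prob p (fun v => v i == x t)) b.
  by move=> x; rewrite E rp_prod // => t; apply: prob_ge0.
under eq_bigr => x _ do rewrite E'.
rewrite (sum_prod (fun (t : 'I_n) c => rp (prob p (fun v => v i == c)) b)).
exact: prodR_const.
Qed.

Lemma union_bound (T : finType) (P : T -> R) (I : finType) (E : pred T) (F : I -> pred T) :
  is_distr P -> (forall w, E w -> exists i, F i w) ->
  prob P E <= \big[Rplus/R0]_i prob P (F i).
Proof.
move=> [H0 _] HE; rewrite /prob.
under [X in _ <= X]eq_bigr => i _ do rewrite sumR_mkcond.
rewrite exchange_big /= sumR_mkcond; apply: sumR_le => w _.
case: (boolP (E w)) => Ew; last by apply: sumR_ge0 => i _; case: (F i w); [apply: H0 | lra].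
have [i Fi] := HE w Ew.
rewrite (bigD1 i) //= Fi.
have : 0 <= \big[Rplus/R0]_(j | j != i) (if F j w then P w else 0).
  by apply: sumR_ge0 => j _; case: (F j w); [apply: H0 | lra].
change R0 with 0; lra.
Qed.

Lemma exists_good (K : finType) (f : K -> R) (k0 : K) c :
  \big[Rplus/R0]_k f k <= INR #|{: K}| * c -> exists k, f k <= c.
Proof.
move=> H; case: (classic (exists k, f k <= c)) => // Hn; exfalso.
have Hlt : forall k, c < f k.
  move=> k; apply: Rnot_le_lt => h; apply: Hn; by exists k.
have : INR #|{: K}| * c < \big[Rplus/R0]_k f k; last lra.
rewrite -(sumR_const predT) (bigD1 k0) //= [X in _ < X](bigD1 k0) //=.
apply: Rplus_lt_le_compat; first exact: Hlt.
apply: sumR_le => k _; left; exact: Hlt.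
Qed.

Lemma sumR_const_all (I : finType) (c : R) : \big[Rplus/R0]_(i : I) c = INR #|{: I}| * c.
Proof. by rewrite (sumR_const predT); congr (INR _ * _); apply: eq_card. Qed.

Definition gdec r n m (p : Omega r -> R) t (B : 'M['F_2]_(m, n))
  (s : {ffun 'I_r -> 'cV['F_2]_m}) : {ffun 'I_r -> 'cV['F_2]_n} :=
  [ffun i => dec (@prob_n r n p) (Ycomp i) t B (s i)].

Lemma multi_err r n m (p : Omega r -> R) t (B : 'M['F_2]_(m, n)) : is_distr p ->
  error_prob p B (gdec p t B) <= \big[Rplus/R0]_i err (@prob_n r n p) (Ycomp i) t B.
Proof.
move=> Hp; apply: union_bound; first exact: distr_n.
move=> w /= Hne.
have : exists i, gdec p t B (encode B w) i != all_Vn w i.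
  case: (classic (exists i, gdec p t B (encode B w) i != all_Vn w i)) => // Hn.
  exfalso; move: Hne; apply/negP/negPn/eqP/ffunP => i.
  by apply/eqP; apply: contraT => Hi; case: Hn; exists i.
move=> [i Hi]; exists i; move: Hi.
by rewrite /gdec /encode /all_Vn !ffunE Vn_toV.
Qed.

Lemma pow_Rpower2 x n : (Rpower 2 x) ^ n = Rpower 2 (x * INR n).
Proof. by rewrite -Rpower_pow ?Rpower_mult //; apply: exp_pos. Qed.

Lemma two_pow m : two ^ m = Rpower 2 (INR m).
Proof. by rewrite Rpower_pow /two //; lra. Qed.

Lemma bigmax_ge0 (I : finType) (P : pred I) (F : I -> R) : 0 <= \big[Rmax/R0]_(i | P i) F i.
Proof.
rewrite unlock /reducebig; elim: (index_enum I) => [|a s IH] /=; first (change R0 with 0; lra).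
case: (P a) => //; apply: Rle_trans IH _; apply: Rmax_r.
Qed.

Lemma bigmax_lt (I : finType) (P : pred I) (F : I -> R) M : 0 < M ->
  (forall i, P i -> F i < M) -> \big[Rmax/R0]_(i | P i) F i < M.
Proof.
move=> M0 H; apply: (big_ind (fun x => x < M)) => //.
by move=> x y hx hy; apply: Rmax_lub_lt.
Qed.

Lemma sum_marg r (p : Omega r -> R) (i : 'I_r) : is_distr p ->
  \big[Rplus/R0]_c prob p (fun v => v i == c) = 1.
Proof.
move=> [_ H1]; rewrite -H1 (sum_partition (fun v : Omega r => v i)) //.
Qed.

Lemma bound_i n m (Rt g bt S : R) : 0 < bt < 1 -> 0 <= S ->
  S < Rpower 2 ((1 - bt) * g) -> INR n * Rt <= INR m ->
  Rpower (Rpower 2 (- (INR n * g))) (1 - bt) * S ^ n + / Rpower 2 (- (INR n * g)) / two ^ m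
  <= (S / Rpower 2 ((1 - bt) * g)) ^ n + (Rpower 2 (g - Rt)) ^ n.
Proof.
move=> hb S0 HS Hm.
set A := Rpower 2 ((1 - bt) * g).
have Apos : 0 < A by apply: exp_pos.
apply: Rplus_le_compat.
  rewrite Rpower_mult /Rdiv Rpow_mult_distr pow_inv.
  rewrite /A pow_Rpower2 Rmult_comm; apply: Req_le; congr (_ * _).
  rewrite -Rpower_Ropp; congr Rpower; ring.
rewrite Rpower_Ropp Rinv_inv two_pow pow_Rpower2.
have h1 : Rpower 2 (INR n * Rt) <= Rpower 2 (INR m) by apply: Rle_Rpower; lra.
have h2 : 0 < Rpower 2 (INR n * Rt) by apply: exp_pos.
apply: Rle_trans (_ : Rpower 2 (INR n * g) / Rpower 2 (INR n * Rt) <= _).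
  apply: Rmult_le_compat_l; first by left; apply: exp_pos.
  by apply: Rinv_le_contravar.
rewrite /Rdiv -Rpower_Ropp -Rpower_plus; apply: Req_le; congr Rpower; ring.
Qed.

Theorem achievable_above r (p : Omega r -> R) (Rt : R) : is_distr p ->
  \big[Rmax/R0]_i entropy p (Vi i) < Rt -> achievable_sc p Rt.
Proof.
move=> Hp HR.
set Hm := \big[Rmax/R0]_i entropy p (Vi i) in HR.
have Hm0 : 0 <= Hm := bigmax_ge0 _ _.
set g := (Hm + Rt) / 2.
have hb : forall i : 'I_r, exists bt, 0 < bt < 1 /\
   \big[Rplus/R0]_c rp (prob p (fun v => v i == c)) bt < Rpower 2 ((1 - bt) * g).
  move=> i; apply: renyi_lo.
  - by move=> c; apply: prob_ge0.
  - exact: sum_marg.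
  - have Hi : entropy p (Vi i) <= Hm by apply: (le_bigmax (fun i => entropy p (Vi i))).
    move: Hi; rewrite entropyE /Vi.
    set X := \big[Rplus/R0]_c _ => H.
    have l2 := ln2_pos.
    have H' : - X <= Hm * ln 2.
      have := Rmult_le_compat_r (ln 2) _ _ (Rlt_le _ _ l2) H.
      rewrite /Rdiv Rmult_assoc Rinv_l; lra.
    have : Hm < g by rewrite /g; lra.
    move=> h; have : 0 < (g - Hm) * ln 2 by apply: Rmult_lt_0_compat; lra.
    lra.
pose bt i := proj1_sig (constructive_indefinite_description _ (hb i)).
have Hbt : forall i, 0 < bt i < 1 /\
   \big[Rplus/R0]_c rp (prob p (fun v => v i == c)) (bt i) < Rpower 2 ((1 - bt i) * g).
  move=> i; exact: (proj2_sig (constructive_indefinite_description _ (hb i))).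
clearbody bt.
pose S i := \big[Rplus/R0]_c rp (prob p (fun v => v i == c)) (bt i).
have S0 : forall i, 0 <= S i by move=> i; apply: sumR_ge0 => c _; apply: rp_ge0.
pose cc i := S i / Rpower 2 ((1 - bt i) * g).
have cc0 : forall i, 0 <= cc i.
  move=> i; apply: Rmult_le_pos => //; left; apply: Rinv_0_lt_compat; exact: exp_pos.
have cc1 : forall i, cc i < 1.
  move=> i; have hA : 0 < Rpower 2 ((1 - bt i) * g) by apply: exp_pos.
  rewrite /cc; apply: (Rmult_lt_reg_r (Rpower 2 ((1 - bt i) * g))) => //.
  rewrite /Rdiv Rmult_assoc Rinv_l; last lra.
  have := (Hbt i).2; rewrite /S; lra.
pose cm := \big[Rmax/R0]_i cc i.
have cm1 : cm < 1 by apply: bigmax_lt => //; lra.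
have ccm : forall i, cc i <= cm by move=> i; apply: (le_bigmax cc).
pose d := Rpower 2 (g - Rt).
have d0 : 0 < d by apply: exp_pos.
have d1 : d < 1.
  rewrite /d -(Rpower_O 2); last lra.
  apply: Rpower_lt; rewrite /g; lra.
pose e := Rmax cm d.
have e0 : 0 <= e by apply: Rle_trans (Rmax_r _ _); lra.
have e1 : e < 1 by apply: Rmax_lub_lt.
have Rpos : 0 < Rt by lra.
split; first lra.
move=> eps epos.
have INRr := pos_INR r.
have [N HN] := pow_lt_1_zero e ltac:(rewrite Rabs_pos_eq //) (eps / (2 * INR r + 1))
   ltac:(apply: Rdiv_lt_0_compat; lra).
exists N => n /leP Hn.
set m := ceil_nat (INR n * Rt).
have Hm' : INR n * Rt <= INR m.
  have hnr : 0 <= INR n * Rt by apply: Rmult_le_pos; [apply: pos_INR | lra].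
  have := ceil_nat_spec hnr; rewrite -/m; lra.
set t := Rpower 2 (- (INR n * g)).
have tpos : 0 < t by apply: exp_pos.
have HPn := distr_n n Hp.
pose bnd i := Rpower t (1 - bt i) * S i ^ n + / t / two ^ m.
have Havg : \big[Rplus/R0]_(B : 'M['F_2]_(m, n)) \big[Rplus/R0]_i err (@prob_n r n p) (Ycomp i) t B
    <= INR #|{: 'M['F_2]_(m, n)}| * \big[Rplus/R0]_i bnd i.
  rewrite exchange_big /= big_distrr /=; apply: sumR_le => i _.
  have := avg_bound m (Ycomp i) HPn tpos (Hbt i).1.
  by rewrite renyi_tensor.
have [B HB] := exists_good (const_mx (b2F false)) Havg.
exists B, (gdec p t B).
apply: Rle_trans (multi_err t B Hp) _.
apply: Rle_trans HB _.
apply: Rle_trans (_ : \big[Rplus/R0]_(i : 'I_r) (2 * e ^ n) <= _).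
  apply: sumR_le => i _.
  apply: Rle_trans (bound_i (Hbt i).1 (S0 i) (Hbt i).2 Hm') _.
  have h1 : cc i ^ n <= e ^ n.
    apply: pow_incr; split => //; apply: Rle_trans (ccm i) (Rmax_l _ _).
  have h2 : d ^ n <= e ^ n by apply: pow_incr; split; [lra | apply: Rmax_r].
  change ((S i / Rpower 2 ((1 - bt i) * g)) ^ n) with (cc i ^ n); rewrite -/d; lra.
rewrite sumR_const_all card_ord.
have := HN n Hn; rewrite Rabs_pos_eq; last exact: pow_le.
move=> h.
have : INR r * (2 * e ^ n) <= INR r * (2 * (eps / (2 * INR r + 1))).
  apply: Rmult_le_compat_l => //; lra.
have : INR r * (2 * (eps / (2 * INR r + 1))) < eps.
  rewrite /Rdiv; apply: (Rmult_lt_reg_r (2 * INR r + 1)); first lra.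
  field_simplify; lra.
lra.
Qed.

End MAch2.
Import MAch2.

Module MConv.
Local Open Scope ring_scope.
Local Open Scope R_scope.

Lemma renyi_tensor_joint r n (p : Omega r -> R) a : is_distr p ->
  \big[Rplus/R0]_(w : Sample r n) rp (prob_n p w) a = (\big[Rplus/R0]_v rp (p v) a) ^ n.
Proof.
move=> [H0 _].
have E : forall w : Sample r n, rp (prob_n p w) a = \big[Rmult/R1]_t rp (p (w t)) a.
  by move=> w; rewrite /prob_n rp_prod.
rewrite (eq_bigr _ (fun w _ => E w)).
by rewrite (sum_prod (fun (t : 'I_n) v => rp (p v) a)) prodR_const.
Qed.

Lemma prod_pos_each (I : finType) (F : I -> R) : (forall i, 0 <= F i) ->
  0 < \big[Rmult/R1]_i F i -> forall i, 0 < F i.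
Proof.
move=> H0 Hp i; case: (Rlt_dec 0 (F i)) => // h.
have Fi : F i = 0 by have := H0 i; fixnlt; lra.
move: Hp; rewrite (bigD1 i) //= Fi Rmult_0_l; lra.
Qed.

Lemma b2F_eq1 b : (b2F b == b2F true) = b.
Proof. by apply/eqP/idP => [|->] //; case: b => // /b2F_inj. Qed.

Lemma card_colvec m : #|{: 'cV['F_2]_m}| = expn 2 m.
Proof. by rewrite card_mx card_Fp // muln1. Qed.

Section Conv.
Variables (r n m : nat) (p : Omega r -> R) (i0 : 'I_r).
Hypothesis Hp : is_distr p.
Hypothesis Hsupp : forall v : Omega r, 0 < p v -> forall i j, v i = v j.
Variables (B : 'M['F_2]_(m, n)) (g : {ffun 'I_r -> 'cV['F_2]_m} -> {ffun 'I_r -> 'cV['F_2]_n}).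

Definition Cset := [pred w : Sample r n | (g (encode B w) == all_Vn w) && Rltb 0 (prob_n p w)].

Definition hdec (s : 'cV['F_2]_m) : Sample r n :=
  [ffun tt => [ffun i => g [ffun j => s] i tt ord0 == b2F true]].

Lemma Cset_card : leq #|Cset| (expn 2 m).
Proof.
rewrite -card_colvec.
apply: (@leq_trans #|[set hdec s | s in [set: 'cV['F_2]_m]]|); last first.
  by apply: leq_trans (leq_imset_card _ _) _; rewrite cardsT.
apply: subset_leq_card; apply/subsetP => w /andP [/eqP Hg /RltbP Hpos].
apply/imsetP; exists (B *m Vn w i0); first by rewrite inE.
have Hall : forall tt i, w tt i = w tt i0.
  move=> tt i; apply: (Hsupp _ i i0).
  by apply: (prod_pos_each (F := fun tt => p (w tt))) => //; case: Hp.
have He : encode B w = [ffun j => B *m Vn w i0].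
  apply/ffunP => j; rewrite !ffunE; congr (B *m _).
  by apply/matrixP => tt k; rewrite !mxE Hall.
apply/ffunP => tt; apply/ffunP => i.
by rewrite /hdec !ffunE -He Hg /all_Vn ffunE /Vn mxE b2F_eq1.
Qed.
End Conv.

Lemma pt_conv (x t a : R) : 0 <= x -> 0 < t -> 1 < a ->
  x <= t * indR (Rltb 0 x) + rp x a * Rpower t (1 - a).
Proof.
move=> x0 tpos a1.
have h1 : 0 <= rp x a * Rpower t (1 - a).
  apply: Rmult_le_pos; [apply: rp_ge0 | left; apply: exp_pos].
case: (Rle_lt_dec x t) => hx.
  rewrite /indR; case: RltbP => h /=; fixnlt; lra.
have := rp_chern_hi tpos hx a1.
have : 0 <= t * indR (Rltb 0 x) by apply: Rmult_le_pos; [lra | apply: ind_ge0].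
lra.
Qed.

Lemma conv_bound r n m (p : Omega r -> R) (i0 : 'I_r) (B : 'M['F_2]_(m, n))
  (g : {ffun 'I_r -> 'cV['F_2]_m} -> {ffun 'I_r -> 'cV['F_2]_n}) t a :
  is_distr p -> (forall v : Omega r, 0 < p v -> forall i j, v i = v j) ->
  0 < t -> 1 < a ->
  prob (prob_n p) (fun w => g (encode B w) == all_Vn w) <=
  t * two ^ m + Rpower t (1 - a) * (\big[Rplus/R0]_v rp (p v) a) ^ n.
Proof.
move=> Hp Hsupp tpos a1.
have HPn := distr_n n Hp.
have P0 : forall w : Sample r n, 0 <= prob_n p w by case: HPn.
rewrite /prob.
apply: Rle_trans (sumR_le (fun w _ => pt_conv (P0 w) tpos a1)) _.
rewrite big_split /=; apply: Rplus_le_compat.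
  rewrite -big_distrr /=; apply: Rmult_le_compat_l; first lra.
  rewrite /indR -big_mkcondr /= sumR_const Rmult_1_r.
  rewrite (eq_card (B := @Cset r n m p B g)) //.
  have := @Cset_card r n m p i0 Hp Hsupp B g; move/leP/le_INR.
  by rewrite INR_expn /two.
rewrite -(renyi_tensor_joint n a Hp) big_distrr /=.
apply: Rle_trans (sumR_le_all _ _).
  by apply: sumR_le => w _; rewrite Rmult_comm; lra.
move=> w; apply: Rmult_le_pos; [left; apply: exp_pos | apply: rp_ge0].
Qed.

Lemma pow_part n (g a S : R) :
  Rpower (Rpower 2 (- (INR n * g))) (1 - a) * S ^ n = (S / Rpower 2 ((1 - a) * g)) ^ n.
Proof.
rewrite Rpower_mult /Rdiv Rpow_mult_distr pow_inv.
rewrite pow_Rpower2 Rmult_comm; congr (_ * _).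
rewrite -Rpower_Ropp; congr Rpower; ring.
Qed.

Theorem converse r (p : Omega r -> R) (i0 : 'I_r) (Rt : R) : is_distr p ->
  (forall v : Omega r, 0 < p v -> forall i j, v i = v j) ->
  achievable_sc p Rt -> entropy p (Vi i0) <= Rt.
Proof.
move=> Hp Hsupp [R0le Hach]; apply: Rnot_lt_le => HR.
set H := entropy p (Vi i0) in HR.
have HHj : H <= Hj p := entropy_le_Hj (Vi i0) Hp.
set g := (Rt + H) / 2.
have [a [a1 HS]] : exists a, 1 < a /\ \big[Rplus/R0]_v rp (p v) a < Rpower 2 ((1 - a) * g).
  apply: renyi_hi; [by case: Hp | by case: Hp |].
  move: HHj; rewrite HjE => HH.
  have l2 := ln2_pos.
  set X := \big[Rplus/R0]_v _ in HH *.
  have H' : H * ln 2 <= - X.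
    have := Rmult_le_compat_r (ln 2) _ _ (Rlt_le _ _ l2) HH.
    rewrite /Rdiv Rmult_assoc Rinv_l; lra.
  have : g < H by rewrite /g; lra.
  move=> h; have : 0 < (H - g) * ln 2 by apply: Rmult_lt_0_compat; lra.
  lra.
set S := \big[Rplus/R0]_v rp (p v) a in HS.
have S0 : 0 <= S by apply: sumR_ge0 => v _; apply: rp_ge0.
set A := Rpower 2 ((1 - a) * g) in HS.
have Apos : 0 < A by apply: exp_pos.
set c := S / A.
have c0 : 0 <= c by apply: Rmult_le_pos => //; left; apply: Rinv_0_lt_compat.
have c1 : c < 1.
  apply: (Rmult_lt_reg_r A) => //; rewrite /c /Rdiv Rmult_assoc Rinv_l; lra.
set d := Rpower 2 (Rt - g).
have d0 : 0 < d by apply: exp_pos.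
have d1 : d < 1.
  rewrite /d -(Rpower_O 2); last lra.
  apply: Rpower_lt; rewrite /g; lra.
set e := Rmax c d.
have e0 : 0 <= e by apply: Rle_trans (Rmax_r _ _); lra.
have e1 : e < 1 by apply: Rmax_lub_lt.
have [N' HN'] := pow_lt_1_zero e ltac:(rewrite Rabs_pos_eq //) (1/6) ltac:(lra).
have [N HN] := Hach (1/2) ltac:(lra).
set n := maxn N N'.
have [B [g' Herr]] := HN n (leq_maxl _ _).
have hn' : (n >= N')%coq_nat by apply/leP; apply: leq_maxr.
have := HN' n hn'; rewrite Rabs_pos_eq; last exact: pow_le.
move=> hen.
set m := ceil_nat (INR n * Rt) in B g' Herr.
have hnr : 0 <= INR n * Rt by apply: Rmult_le_pos; [apply: pos_INR | lra].
have Hm := ceil_nat_spec hnr; rewrite -/m in Hm.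
set t := Rpower 2 (- (INR n * g)).
have tpos : 0 < t by apply: exp_pos.
have Hb := conv_bound i0 B g' Hp Hsupp tpos a1.
have HC : error_prob p B g' = 1 - prob (prob_n p) (fun w => g' (encode B w) == all_Vn w).
  rewrite /error_prob (prob_compl _ (distr_n n Hp)); congr (1 - _).
  by apply: prob_ext => w; rewrite negbK.
rewrite pow_part -/A -/c in Hb.
have h2m : t * two ^ m <= 2 * d ^ n.
  rewrite two_pow /t /d pow_Rpower2 -Rpower_plus.
  have -> : 2 * Rpower 2 ((Rt - g) * INR n) = Rpower 2 ((Rt - g) * INR n + 1).
    by rewrite Rpower_plus Rpower_1; [ring | lra].
  apply: Rle_Rpower; lra.
have hc : c ^ n <= e ^ n by apply: pow_incr; split => //; apply: Rmax_l.
have hd : d ^ n <= e ^ n by apply: pow_incr; split; [lra | apply: Rmax_r].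
lra.
Qed.

End MConv.
Import MConv.

Module MFinal.
Local Open Scope R_scope.

Lemma xln_le0 q : q <= 1 -> xln q <= 0.
Proof.
move=> h; rewrite /xln; case: Rlt_dec => /= H; last lra.
have : ln q <= 0 by rewrite -ln_1; apply: ln_le'.
nra.
Qed.

Lemma Hj_ge0 (T : finType) (p : T -> R) : is_distr p -> 0 <= Hj p.
Proof.
move=> Hp; rewrite HjE.
have : \big[Rplus/R0]_w xln (p w) <= 0.
  apply: Rle_trans (_ : \big[Rplus/R0]_(w : T) 0 <= _).
    apply: sumR_le => w _; apply: xln_le0.
    by have := prob_le1 (pred1 w) Hp; rewrite /prob big_pred1_eq.
  by rewrite big1_eq; lra.
have := ln2_pos => h1 h2.
apply: Rmult_le_pos; [lra | left; apply: Rinv_0_lt_compat; lra].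
Qed.

Lemma entropy_ge0 (T U : finType) (p : T -> R) (X : T -> U) : is_distr p -> 0 <= entropy p X.
Proof.
move=> Hp; rewrite entropyE.
have : \big[Rplus/R0]_u xln (prob p (fun w => X w == u)) <= 0.
  apply: Rle_trans (_ : \big[Rplus/R0]_(u : U) 0 <= _).
    by apply: sumR_le => u _; apply: xln_le0; apply: prob_le1.
  by rewrite big1_eq; lra.
have := ln2_pos => h1 h2.
apply: Rmult_le_pos; [lra | left; apply: Rinv_0_lt_compat; lra].
Qed.

Lemma VS_setT r (w : Omega r) : VS [set: 'I_r] w = w.
Proof. by apply/ffunP => i; rewrite ffunE in_setT. Qed.

Lemma VS_set0 r (w : Omega r) : VS set0 w = [ffun => false].
Proof. by apply/ffunP => i; rewrite !ffunE in_set0. Qed.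

Lemma cond_full r (p : Omega r -> R) : is_distr p ->
  cond_entropy p (VS [set: 'I_r]) (VS (~: [set: 'I_r])) = Hj p.
Proof.
move=> Hp; rewrite (cond_const _ _ (y0 := [ffun => false])) //; last first.
  by move=> w; rewrite setCT VS_set0.
apply: entropy_inj => // w w' _ _; by rewrite !VS_setT.
Qed.

Lemma RSW_ge r (p : Omega r -> R) : leq 1 r -> is_distr p -> Hj p <= INR r * R_SW p.
Proof.
move=> Hr Hp.
have hS : [set: 'I_r] != set0.
  apply/set0Pn; exists (Ordinal Hr); exact: in_setT.
have := @le_bigmax _ (fun S : {set 'I_r} => S != set0) (fun S : {set 'I_r} => cond_entropy p (VS S) (VS (~: S)) / INR #|S|) _ hS.
rewrite cond_full // cardsT card_ord -/(R_SW p) => h.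
have rpos : 0 < INR r by apply: lt_0_INR; apply/leP.
have := Rmult_le_compat_l (INR r) _ _ (Rlt_le _ _ rpos) h.
rewrite /Rdiv -Rmult_assoc (Rmult_comm (INR r)) Rmult_assoc Rinv_r; lra.
Qed.

Lemma Rsc_le_Hmax r (p : Omega r -> R) Rsc : is_distr p -> is_inf (achievable_sc p) Rsc ->
  Rsc <= \big[Rmax/R0]_i entropy p (Vi i).
Proof.
move=> Hp [Hlb _]; apply: Rnot_lt_le => h.
set Hm := \big[Rmax/R0]_i entropy p (Vi i) in h.
have h2 : Hm < (Rsc + Hm) / 2 by lra.
have := Hlb ((Rsc + Hm) / 2) (achievable_above Hp h2).
lra.
Qed.

Lemma Hmax_le_Hj r (p : Omega r -> R) : is_distr p -> \big[Rmax/R0]_i entropy p (Vi i) <= Hj p.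
Proof.
move=> Hp; apply: bigmax_le; first exact: Hj_ge0.
move=> i _; exact: entropy_le_Hj.
Qed.

Theorem part2 (r : nat) (Hr : (1 <= r)%nat) (p : Omega r -> R) :
  is_distr p -> forall Rsc, is_inf (achievable_sc p) Rsc ->
  Rsc <= Rmin (INR r * R_SW p) (\big[Rmax/R0]_(i : 'I_r) entropy p (Vi i)).
Proof.
move=> Hp Rsc HRsc.
have h1 := Rsc_le_Hmax Hp HRsc.
apply: Rmin_glb => //.
apply: Rle_trans h1 _; apply: Rle_trans (Hmax_le_Hj Hp) _; exact: RSW_ge.
Qed.

Lemma prob_witness (T : finType) (p : T -> R) (E : pred T) : is_distr p ->
  0 < prob p E -> exists w, E w /\ 0 < p w.
Proof.
move=> [H0 _] Hpos; case: (classic (exists w, E w /\ 0 < p w)) => // Hn; exfalso.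
have : prob p E <= 0.
  rewrite /prob; apply: Rle_trans (_ : \big[Rplus/R0]_(w | E w) 0 <= _).
    apply: sumR_le => w Ew; apply: Rnot_lt_le => h; apply: Hn; by exists w.
  by rewrite big1_eq; lra.
lra.
Qed.

Section Example.
Variables (r : nat) (p : Omega r -> R) (i0 : 'I_r).
Hypothesis Hp : is_distr p.
Hypothesis Hsupp : forall v : Omega r, 0 < p v -> forall i j, v i = v j.

Lemma supp_eq (w w' : Omega r) j : 0 < p w -> 0 < p w' -> w j = w' j -> w = w'.
Proof.
move=> h h' e; apply/ffunP => i.
by rewrite (Hsupp h i j) (Hsupp h' i j).
Qed.

Lemma Hj_ex : Hj p = entropy p (Vi i0).
Proof.
symmetry; apply: entropy_inj => // w w' h h' e; exact: (supp_eq h h' e).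
Qed.

Lemma cond_ex (S : {set 'I_r}) : S != [set: 'I_r] ->
  cond_entropy p (VS S) (VS (~: S)) = 0.
Proof.
move=> HS.
have [j Hj] : exists j, j \in ~: S.
  apply/set0Pn; apply: contra HS => /eqP H; by rewrite -setC0 -H setCK.
apply: cond_zero => u y Hpos.
have [w0 [/andP [/eqP E1 /eqP E2] P0]] := prob_witness Hp Hpos.
rewrite /prob [in RHS](bigID (fun w => VS S w == u)) /=.
rewrite [X in _ = _ + X]big1; first by change R0 with 0; rewrite Rplus_0_r; apply: eq_bigl => w; rewrite andbC.
move=> w /andP [/eqP Ey Hu].
case: (Rlt_dec 0 (p w)) => h; last by case: Hp => H0 _; have := H0 w; fixnlt; lra.
exfalso; move/negP: Hu; apply.
have ej : w j = w0 j.
  have := congr1 (fun f : Omega r => f j) Ey; have := congr1 (fun f : Omega r => f j) E2.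
  by rewrite /VS !ffunE Hj => -> ->.
by rewrite (supp_eq h P0 ej) E1.
Qed.

Lemma RSW_ex : leq 1 r -> R_SW p = entropy p (Vi i0) / INR r.
Proof.
move=> Hr.
have rpos : 0 < INR r by apply: lt_0_INR; apply/leP.
have H0 := entropy_ge0 (Vi i0) Hp.
have M0 : 0 <= entropy p (Vi i0) / INR r by apply: Rmult_le_pos; [lra | left; apply: Rinv_0_lt_compat].
apply: Rle_antisym.
  apply: bigmax_le => // S HS.
  case: (boolP (S == [set: 'I_r])) => [/eqP ->|HT].
    rewrite cond_full // Hj_ex cardsT card_ord; lra.
  rewrite cond_ex //; rewrite /Rdiv Rmult_0_l; lra.
have hS : [set: 'I_r] != set0.
  apply/set0Pn; exists (Ordinal Hr); exact: in_setT.
have := @le_bigmax _ (fun S : {set 'I_r} => S != set0) (fun S : {set 'I_r} => cond_entropy p (VS S) (VS (~: S)) / INR #|S|) _ hS.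
by rewrite cond_full // cardsT card_ord Hj_ex.
Qed.

Lemma Rsc_ex Rsc : is_inf (achievable_sc p) Rsc -> Rsc = entropy p (Vi i0).
Proof.
move=> HRsc; apply: Rle_antisym.
  apply: Rle_trans (Rsc_le_Hmax Hp HRsc) _.
  rewrite -Hj_ex; exact: Hmax_le_Hj.
case: HRsc => _ Hg; apply: Hg => x Hx.
exact: (converse i0 Hp Hsupp Hx).
Qed.
End Example.

Definition cst r (b : bool) : Omega r := [ffun => b].

Definition pex r (v : Omega r) : R :=
  if (v == cst r true) || (v == cst r false) then 1/2 else 0.

Section Pex.
Variables (r : nat) (i0 : 'I_r).

Lemma cst_neq b : cst r b != cst r (~~ b).
Proof.
apply/eqP => /(congr1 (fun f : Omega r => f i0)); rewrite !ffunE; by case: b.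
Qed.

Lemma pex_cst b : pex (cst r b) = 1/2.
Proof. by rewrite /pex; case: b; rewrite eqxx ?orbT. Qed.

Lemma pex_distr : is_distr (@pex r).
Proof.
split.
  by move=> v; rewrite /pex; case: ifP => _; lra.
rewrite (bigD1 (cst r true)) //= (bigD1 (cst r false)) /=; last exact: (cst_neq false).
rewrite big1 /=.
  rewrite !pex_cst; change R0 with 0; lra.
move=> v /andP [h1 h2]; rewrite /pex (negbTE h1) (negbTE h2) //.
Qed.

Lemma pex_supp (v : Omega r) : 0 < pex v -> forall i j, v i = v j.
Proof.
rewrite /pex; case: ifP => [/orP [] /eqP -> _ i j|_ h]; [by rewrite !ffunE | by rewrite !ffunE | lra].
Qed.

Lemma pex_marg b : prob (@pex r) (fun v => Vi i0 v == b) = 1/2.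
Proof.
rewrite /prob (bigD1 (cst r b)) /=; last by rewrite /Vi ffunE.
rewrite big1.
  rewrite pex_cst; change R0 with 0; lra.
move=> v /andP [/eqP hv hne].
have h2 : v != cst r (~~ b) by apply/eqP => E; move: hv; rewrite E /Vi ffunE; destruct b.
clear hv; rewrite /pex; destruct b => /=; by rewrite (negbTE hne) (negbTE h2).
Qed.

Lemma pex_entropy : 0 < entropy (@pex r) (Vi i0).
Proof.
rewrite /entropy big_bool /= !pex_marg /xlog2.
case: Rlt_dec => /= h; last lra.
rewrite /log2.
have : ln (1/2) < 0 by rewrite -ln_1; apply: ln_increasing; lra.
have := ln2_pos => h1 h2.
have h3 : ln (1/2) / ln 2 < 0.
  rewrite /Rdiv; have := Rinv_0_lt_compat _ h1; nra.
change R0 with 0; lra.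
Qed.
End Pex.


End MFinal.
Import MFinal.

Local Open Scope R_scope.

Theorem claim2 :
  (* (i) existence of a strict gap, for every r >= 2 *)
  (forall r : nat, (2 <= r)%nat ->
     exists p : Omega r -> R, is_distr p /\
       exists Rsc : R, is_inf (achievable_sc p) Rsc /\ Rsc > R_SW p) /\
  (* (i) the example: V_1 = ... = V_r almost surely, H(V_1) > 0 *)
  (forall (r : nat) (Hr : (2 <= r)%nat) (p : Omega r -> R),
     is_distr p ->
     (forall v : Omega r, 0 < p v -> forall i j : 'I_r, v i = v j) ->
     0 < entropy p (Vi (Ordinal (ltn_trans (ltnSn 0) Hr))) ->
     R_SW p = entropy p (Vi (Ordinal (ltn_trans (ltnSn 0) Hr))) / INR r /\
     (forall Rsc, is_inf (achievable_sc p) Rsc ->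
        Rsc = entropy p (Vi (Ordinal (ltn_trans (ltnSn 0) Hr))))) /\
  (* (ii) the upper bound *)
  (forall (r : nat) (Hr : (1 <= r)%nat) (p : Omega r -> R),
     is_distr p ->
     forall Rsc, is_inf (achievable_sc p) Rsc ->
       Rsc <= Rmin (INR r * R_SW p)
                   (\big[Rmax/R0]_(i : 'I_r) entropy p (Vi i))).
Proof.
have Hex : forall (r : nat) (Hr : (2 <= r)%nat) (p : Omega r -> R),
     is_distr p ->
     (forall v : Omega r, 0 < p v -> forall i j : 'I_r, v i = v j) ->
     0 < entropy p (Vi (Ordinal (ltn_trans (ltnSn 0) Hr))) ->
     R_SW p = entropy p (Vi (Ordinal (ltn_trans (ltnSn 0) Hr))) / INR r /\
     (forall Rsc, is_inf (achievable_sc p) Rsc ->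
        Rsc = entropy p (Vi (Ordinal (ltn_trans (ltnSn 0) Hr)))).
  move=> r Hr p Hp Hs Hpos; split.
    by apply: RSW_ex => //; apply: ltn_trans (ltnSn 0) Hr.
  by move=> Rsc; apply: Rsc_ex.
split; last split => //; last first.
  by move=> r Hr p Hp Rsc HR; apply: part2.
move=> r Hr.
set i0 : 'I_r := Ordinal (ltn_trans (ltnSn 0) Hr).
exists (@pex r); split; first exact: pex_distr.
have Hp := @pex_distr r i0.
have [Rsc HRsc] : exists Rsc, is_inf (achievable_sc (@pex r)) Rsc.
  apply: inf_exists.
    exists (\big[Rmax/R0]_i entropy (@pex r) (Vi i) + 1).
    apply: achievable_above => //; lra.
  by move=> x [].
exists Rsc; split => //.
have [E1 E2] := Hex r Hr (@pex r) Hp (@pex_supp r) (pex_entropy i0).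
rewrite E1 (E2 _ HRsc).
have h := pex_entropy i0.
have r2 : 2 <= INR r by apply: (le_INR 2 r); apply/leP.
rewrite -/i0.
set H := entropy _ _ in h *.
apply: (Rmult_lt_reg_r (INR r)); first lra.
rewrite /Rdiv Rmult_assoc Rinv_l; last lra.
nra.
Qed.
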